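(* Let $\rho:\mathbb{R}\to\mathbb{R}$ be differentiable, applied element-wise to vectors. Let $D=\{u\in\mathbb{R}:\rho'(u)\neq 0\}$ and define $\varsigma:D\to\mathbb{R}$, $\varsigma(u)=u/\rho'(u)$ (applied element-wise to vectors, i.e. $\varsigma(\vec{s})=\vec{s}\oslash\rho'(\vec{s})$ with $\oslash$ the Hadamard division), and assume $\varsigma$ is a bijection from $D$ onto $\mathbb{R}$; set $\rho_\varsigma:=\rho\circ\varsigma^{-1}:\mathbb{R}\to\mathbb{R}$. Let $\vec{W}\in\mathbb{R}^{N\times N}$, $\vec{b}\in\mathbb{R}^N$, $\vec{U}\in\mathbb{R}^{N\times d}$ be such that the CHN defined by these data is well-behaved, and let $\vec{x}\in\mathbb{R}^d$ be an input all of whose entries lie in $D$. Let $\vec{s}^*\in\mathbb{R}^N$ be the equilibrium of the CHN, i.e. the unique solution of $\vec{s}^*=\rho'(\vec{s}^* )\odot(\vec{W}\rho(\vec{s}^* )+\vec{b}+\vec{U}\rho(\vec{x}))$. Then all entries of $\vec{s}^*$ lie in $D$, and $\vec{s}^*_\varsigma:=\varsigma(\vec{s}^* )$ satisfies the HAM equilibrium equation with non-linearity $\rho_\varsigma$ and preprocessed input $\varsigma(\vec{x})$: $\vec{s}^*_\varsigma=\vec{W}\rho_\varsigma(\vec{s}^*_\varsigma)+\vec{b}+\vec{U}\rho_\varsigma(\varsigma(\vec{x}))$; conversely, $\vec{s}^*=\varsigma^{-1}(\vec{s}^*_\varsigma)$.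
   Context: A CHN (continuous Hopfield network) with element-wise non-linearity $\rho$ and parameters $\vec{W},\vec{b},\vec{U}$ assigns to an input $\vec{x}\in\mathbb{R}^d$ its equilibrium state(s), the solutions $\vec{s}^*\in\mathbb{R}^N$ of $\vec{s}^*=\rho'(\vec{s}^* )\odot(\vec{W}\rho(\vec{s}^* )+\vec{b}+\vec{U}\rho(\vec{x}))$, where $\odot$ is the Hadamard product. The CHN is called well-behaved if for every input $\vec{x}$ this equation has exactly one solution $\vec{s}^*$ and this solution is not identically zero. A HAM with non-linearity $\sigma$ has equilibrium equation $\vec{s}^*=\vec{W}\sigma(\vec{s}^* )+\vec{b}+\vec{U}\sigma(\vec{x})$. *)

(* Defs.v *)
From HB Require Import structures.
From mathcomp Require Import all_boot all_order all_algebra.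
From mathcomp Require Import all_classical all_reals all_analysis.
Set Implicit Arguments. Unset Strict Implicit. Unset Printing Implicit Defensive.
Import Order.TTheory GRing.Theory Num.Theory.
Local Open Scope ring_scope.

Section Defs.
Variable R : realType.

Definition Dset (rho : R -> R) : set R := [set u | (derive1 rho) u != 0].

Definition varsigma (rho : R -> R) (u : R) : R := u / (derive1 rho) u.

Definition chn_equilibrium (N d : nat) (rho : R -> R) (W : 'M[R]_N) (b : 'cV[R]_N)
  (U : 'M[R]_(N, d)) (x : 'cV[R]_d) (s : 'cV[R]_N) : Prop :=
  s = map2_mx (fun a c => a * c) (map_mx (derive1 rho) s)
        (W *m map_mx rho s + b + U *m map_mx rho x).

Definition chn_well_behaved (N d : nat) (rho : R -> R) (W : 'M[R]_N) (b : 'cV[R]_N)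
  (U : 'M[R]_(N, d)) : Prop :=
  forall x : 'cV[R]_d,
    (exists! s : 'cV[R]_N, chn_equilibrium rho W b U x s) /\
    (forall s, chn_equilibrium rho W b U x s -> s <> 0).

Definition ham_equilibrium (N d : nat) (sigma : R -> R) (W : 'M[R]_N) (b : 'cV[R]_N)
  (U : 'M[R]_(N, d)) (x : 'cV[R]_d) (s : 'cV[R]_N) : Prop :=
  s = W *m map_mx sigma s + b + U *m map_mx sigma x.

End Defs.

(* Main.v *)
Require Import Defs.
From HB Require Import structures.
From mathcomp Require Import all_boot all_order all_algebra.
From mathcomp Require Import all_classical all_reals all_analysis.
Import Order.TTheory GRing.Theory Num.Theory.
Local Open Scope ring_scope.
Local Open Scope classical_set_scope.

Theorem theorem2 (R : realType) (N d : nat) (rho : R -> R)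
  (varsigma_inv : R -> R)
  (W : 'M[R]_N) (b : 'cV[R]_N) (U : 'M[R]_(N, d)) (x : 'cV[R]_d) (s : 'cV[R]_N) :
  (forall u : R, derivable rho u 1) ->
  (* varsigma is a bijection from D onto R ... *)
  {in Dset rho &, injective (varsigma rho)} ->
  (forall y : R, exists2 u, u \in Dset rho & varsigma rho u = y) ->
  (* ... and varsigma_inv is its inverse R -> D *)
  (forall y : R, varsigma_inv y \in Dset rho /\ varsigma rho (varsigma_inv y) = y) ->
  chn_well_behaved rho W b U ->
  (forall i, x i ord0 \in Dset rho) ->
  chn_equilibrium rho W b U x s ->
  let s_vs := map_mx (varsigma rho) s in
  (forall i, s i ord0 \in Dset rho) /\
  ham_equilibrium (rho \o varsigma_inv) W b U (map_mx (varsigma rho) x) s_vs /\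
  s = map_mx varsigma_inv s_vs.
Proof.
move=> _ inj surj inv _ xD heq s_vs; rewrite /chn_equilibrium in heq.
have D0 : (0:R) \in Dset rho.
  have [u uD hu] := surj 0.
  move: uD hu; rewrite /varsigma => uD /eqP; rewrite mulf_eq0 invr_eq0.
  case/orP=> /eqP h; first by rewrite -h.
  by move: uD; rewrite inE /Dset /= h eqxx.
have invK : forall u, u \in Dset rho -> varsigma_inv (varsigma rho u) = u.
  move=> u uD; have [h1 h2] := inv (varsigma rho u); exact: inj.
have sD : forall i, s i ord0 \in Dset rho.
  move=> i; have := congr1 (fun M : 'cV[R]_N => M i ord0) heq; rewrite !mxE => hs.
  case: (boolP (derive1 rho (s i ord0) == 0)) => [/eqP h0|hn].
    by move: hs; rewrite h0 mul0r => ->.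
  by rewrite inE /Dset /=.
have sE : forall i (j : 'I_1), s i j \in Dset rho.
  by move=> i j; rewrite (ord1 j).
have xE : forall i (j : 'I_1), x i j \in Dset rho.
  by move=> i j; rewrite (ord1 j).
have rs : map_mx (rho \o varsigma_inv) s_vs = map_mx rho s.
  by apply/matrixP=> i j; rewrite !mxE /= invK.
have rx : map_mx (rho \o varsigma_inv) (map_mx (varsigma rho) x) = map_mx rho x.
  by apply/matrixP=> i j; rewrite !mxE /= invK.
split => //; split.
  rewrite /ham_equilibrium rs rx; apply/matrixP=> i j.
  rewrite (ord1 j) /s_vs mxE /varsigma.
  have := congr1 (fun M : 'cV[R]_N => M i ord0) heq; rewrite [in RHS]mxE [in RHS]mxE => hs.
  have hn : derive1 rho (s i ord0) != 0 by have := sD i; rewrite inE.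
  by apply: (mulIf hn); rewrite divfK // [LHS]hs mulrC.
by apply/matrixP=> i j; rewrite /s_vs !mxE invK.
Qed.
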